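(* Let $G$ be a graph with a linear order $<$ on $V(G)$ satisfying the X-property, let $s<t$ be vertices with $d^*:=\operatorname{dist}(s,t)<\infty$, and let $P=p_0,p_1,\dots,p_{d^*}$ (with $p_0=s$, $p_{d^*}=t$) be a shortest $s$-$t$ path. Then every $p_i$ with $i<\operatorname{righti}(P)$ satisfies $p_i<t$, and every $p_i$ with $i>\operatorname{lefti}(P)$ satisfies $p_i>s$.
   Context: The X-property: for all vertices $p<q<r<s$, if $\{p,r\}\in E(G)$ and $\{q,s\}\in E(G)$ then $\{p,s\}\in E(G)$. $\operatorname{dist}$ is the number of edges of a shortest path. $\operatorname{lefti}(P)$ is the index $i$ such that $p_i$ is the leftmost (w.r.t. $<$) vertex of $P$, and $\operatorname{righti}(P)$ the index of the rightmost vertex of $P$. *)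

(* Defs.v *)
From mathcomp Require Import all_boot all_order.
Set Implicit Arguments. Unset Strict Implicit. Unset Printing Implicit Defensive.
Import Order.TTheory.
Local Open Scope order_scope.

Definition simple_graph (T : Type) (e : rel T) : Prop :=
  irreflexive e /\ symmetric e.

Definition X_property d (T : orderType d) (e : rel T) : Prop :=
  forall p q r s : T, p < q -> q < r -> r < s -> e p r -> e q s -> e p s.

(* A walk from s to t: the vertex sequence s :: p, consecutive vertices
   adjacent, ending at t. Its length (number of edges) is size p. *)
Definition st_walk (T : eqType) (e : rel T) (s t : T) (p : seq T) : Prop :=
  path e s p /\ last s p = t.

Definition shortest_st_path (T : eqType) (e : rel T) (s t : T) (p : seq T)
  : Prop :=
  st_walk e s t p /\ forall q, st_walk e s t q -> size p <= size q.

(* i is lefti(P) for P = s :: p (vertices p_0 = s, ..., p_{size p}):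
   p_i is the leftmost vertex of P. *)
Definition is_lefti d (T : orderType d) (s : T) (p : seq T) (i : nat) : Prop :=
  (i <= size p)%N /\ forall j, (j <= size p)%N -> nth s (s :: p) i <= nth s (s :: p) j.

Definition is_righti d (T : orderType d) (s : T) (p : seq T) (i : nat) : Prop :=
  (i <= size p)%N /\ forall j, (j <= size p)%N -> nth s (s :: p) j <= nth s (s :: p) i.

(* Main.v *)
Require Import Defs.
From mathcomp Require Import all_boot all_order.
From mathcomp Require Import zify.
Import Order.TTheory.
Local Open Scope order_scope.

Ltac nlia := repeat match goal with H : ?A |- _ =>
  lazymatch A with
  | is_true (leq _ _) => fail
  | is_true (leq _ _ && leq _ _) => fail
  | @eq nat _ _ => fail
  | is_true (_ != _ :> nat) => fail
  | _ => clear H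
  end end; lia.

Lemma crossing_nat (P : pred nat) r m :
  ~~ P r -> P (r + m) -> exists k, (r <= k < r + m)%N /\ ~~ P k /\ P k.+1.
Proof.
move=> Hr; elim: m => [|m IH]; first by rewrite addn0 (negbTE Hr).
rewrite addnS => Hm.
case Hp: (P (r + m)).
  have [k [Hk [H1 H2]]] := IH Hp; exists k; split => //; nlia.
exists (r + m)%N; split; first nlia. by rewrite Hp.
Qed.

Lemma core d (T : orderType d) (e : rel T) (f : nat -> T) n :
  symmetric e -> X_property e ->
  (forall k, (k < n)%N -> e (f k) (f k.+1)) ->
  (forall x y, (x <= n)%N -> (y <= n)%N -> f x = f y -> x = y) ->
  (forall x y, (x <= n)%N -> (y <= n)%N -> e (f x) (f y) -> (y <= x.+1)%N) ->
  f 0%N < f n ->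
  forall r i, (r <= n)%N -> (forall j, (j <= n)%N -> f j <= f r) -> (i < r)%N ->
  f i < f n.
Proof.
move=> esym X Hedge Hinj Hsh H0 r i rn Hmax ir.
rewrite ltNge; apply/negP => Hi.
have Hti : f n < f i.
  rewrite lt_neqAle Hi andbT; apply/eqP => /Hinj h.
  have := h (leqnn n); nlia.
have [j [ji [Ha Hc]]] : exists j, (j < i)%N /\ f j < f n /\ f n < f j.+1.
  clear Hi; move: ir Hti; elim: i => [|i IH] ir Hti.
    by move: (lt_trans H0 Hti); rewrite ltxx.
  case: (ltP (f i) (f n)) => h.
    by exists i.
  have Hne : f i != f n by apply/eqP => /Hinj h'; have := h' ltac:(nlia) (leqnn n); nlia.
  have [j [? ?]] := IH ltac:(nlia) ltac:(by rewrite lt_neqAle eq_sym Hne h).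
  exists j; split => //; nlia.
have Hcr : f j.+1 < f r.
  rewrite lt_neqAle Hmax ?andbT; last nlia.
  by apply/eqP => /Hinj h; have := h ltac:(nlia) rn; nlia.
pose P x := (f j < f x) && (f x < f j.+1).
have Pr : ~~ P r by rewrite /P negb_and -!leNgt (ltW Hcr) orbT.
have Pn : P (r + (n - r))%N by rewrite subnKC // /P Ha Hc.
have [k [Hk [Pk Pk1]]] := crossing_nat _ _ _ Pr Pn.
move: Pk Pk1; rewrite /P => Pk /andP [Pk1a Pk1c].
have ek : e (f k) (f k.+1) by apply: Hedge; nlia.
have Hja : f k != f j by apply/eqP => /Hinj h; have := h ltac:(nlia) ltac:(nlia); nlia.
have Hjc : f k != f j.+1 by apply/eqP => /Hinj h; have := h ltac:(nlia) ltac:(nlia); nlia.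
have eac : e (f j) (f j.+1) by apply: Hedge; nlia.
case: (ltgtP (f k) (f j)) => hk.
- have := X _ _ _ _ hk Pk1a Pk1c ek eac.
  rewrite esym => /Hsh h.
  have kr : k != r by apply/eqP => kr; move: hk; rewrite kr => hk;
     by move: (lt_trans hk (lt_trans (lt_trans Ha Hc) Hcr)); rewrite ltxx.
  have := h ltac:(nlia) ltac:(nlia); nlia.
- have hk' : f j.+1 < f k.
    move: Pk; rewrite hk /= -leNgt le_eqVlt => /orP [/eqP h|//].
    by move: Hjc; rewrite h eqxx.
  rewrite esym in ek.
  have := X _ _ _ _ Pk1a Pk1c hk' eac ek.
  move=> /Hsh h; have := h ltac:(nlia) ltac:(nlia); nlia.
- by move: Hja; rewrite hk eqxx.
Qed.

Lemma last_take_nth (T : Type) (s : T) (p : seq T) k :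
  (k <= size p)%N -> last s (take k p) = nth s (s :: p) k.
Proof.
elim: p s k => [|x p IH] s [|k] //= Hk.
rewrite IH //; apply: set_nth_default => /=; nlia.
Qed.

Section Walk.
Variables (T : eqType) (e : rel T) (s t : T) (p : seq T).
Hypothesis Hsh : shortest_st_path e s t p.
Let f k := nth s (s :: p) k.

Lemma walk_mid x y (mid : seq T) :
  (x <= size p)%N -> (y <= size p)%N ->
  path e (f x) mid -> last (f x) mid = f y ->
  (size p <= x + size mid + (size p - y))%N.
Proof.
case: Hsh => [[Hp Hl] Hmin] Hx Hy Hm Hlm.
have := Hmin (take x p ++ mid ++ drop y p).
rewrite !size_cat size_takel // size_drop addnA; apply.
have Hpy : path e s (take y p ++ drop y p) by rewrite cat_take_drop.
have Hpx : path e s (take x p ++ drop x p) by rewrite cat_take_drop.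
rewrite cat_path in Hpy; rewrite cat_path in Hpx.
case/andP: Hpy => _ Hpy; case/andP: Hpx => Hpx _.
rewrite (@last_take_nth _ s p y Hy) in Hpy.
split.
  rewrite cat_path Hpx /= cat_path (@last_take_nth _ s p x Hx) Hm /= Hlm -/(f y).
  exact: Hpy.
rewrite !last_cat (@last_take_nth _ s p x Hx) -/(f x) Hlm -Hl.
rewrite -{2}(cat_take_drop y p) last_cat (@last_take_nth _ s p y Hy).
by [].
Qed.
End Walk.

Theorem corollary9 (d : Order.disp_t) (T : orderType d) (e : rel T)
  (s t : T) (p : seq T) :
  simple_graph e -> X_property e -> s < t ->
  shortest_st_path e s t p ->
  (forall r i, is_righti s p r -> (i < r)%N -> nth s (s :: p) i < t) /\
  (forall l i, is_lefti s p l -> (l < i)%N -> (i <= size p)%N ->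
     s < nth s (s :: p) i).
Proof.
move=> [eirr esym] X st Hsh.
pose f k := nth s (s :: p) k.
pose n := size p.
have Hfn : f n = t.
  by case: (Hsh) => [[_ Hl] _]; rewrite -Hl /f /n -last_take_nth // take_size.
have Hedge : forall k, (k < n)%N -> e (f k) (f k.+1).
  by case: (Hsh) => [[Hp _] _] k Hk; move/(pathP s): Hp; apply.
have Hinj : forall x y, (x <= n)%N -> (y <= n)%N -> f x = f y -> x = y.
  move=> x y Hx Hy Hxy.
  wlog xy : x y Hx Hy Hxy / (x <= y)%N.
    move=> H; case: (leqP x y) => h; first exact: H.
    by symmetry; apply: H => //; [ nlia].
  have := @walk_mid _ _ _ _ _ Hsh x y [::] Hx Hy isT Hxy; rewrite /= addn0.
  rewrite -/n; nlia.
have Hsh' : forall x y, (x <= n)%N -> (y <= n)%N -> e (f x) (f y) -> (y <= x.+1)%N.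
  move=> x y Hx Hy Hxy; rewrite leqNgt; apply/negP => h.
  have := @walk_mid _ _ _ _ _ Hsh x y [:: f y] Hx Hy; rewrite /= Hxy /= => /(_ isT erefl).
  rewrite -/n; nlia.
have Hsh2 : forall x y, (x <= n)%N -> (y <= n)%N -> e (f x) (f y) -> (x <= y.+1)%N.
  by move=> x y Hx Hy; rewrite esym; apply: Hsh'.
split.
  move=> r i [Hr Hmax] ir; rewrite -Hfn.
  apply: (@core _ _ e f n esym X Hedge Hinj Hsh' _ r i) => //.
  by rewrite Hfn.
move=> l i [Hl Hmin] li Hi.
pose g k := f (n - k)%N.
have Xd : X_property (e : rel (T^d)).
  move=> a b c d0 ab bc cd Hac Hbd.
  rewrite esym; apply: (X d0 c b a) => //; by rewrite esym.
have Hg0 : g 0%N = t by rewrite /g subn0.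
have Hgn : g n = s by rewrite /g subnn.
have Hc : (g (n - i)%N : T^d) < g n.
  apply: (@core _ (T^d) e g n esym Xd _ _ _ _ (n - l)%N (n - i)%N).
  - move=> k Hk; rewrite esym /g.
    have -> : (n - k = (n - k.+1).+1)%N by nlia.
    apply: Hedge; nlia.
  - move=> x y Hx Hy /Hinj h; have := h ltac:(nlia) ltac:(nlia); nlia.
  - move=> x y Hx Hy /Hsh2 h; have := h ltac:(nlia) ltac:(nlia); nlia.
  - by rewrite Hg0 Hgn.
  - nlia.
  - move=> j Hj; rewrite /g (@subKn l n) //; apply: Hmin; nlia.
  - nlia.
move: Hc; rewrite Hgn /g subKn //.
Qed.
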